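(* Consider the weak GIC with power budgets $P_1,P_2$ and a weight $\mu>0$, and consider superposition schemes in which user $i$ transmits a sum of independent Gaussian public and private code-books with public power $P_i^{(public)}$ and private power $P_i^{(private)}$, subject to $P_i^{(public)}+P_i^{(private)}\le P_i$. If a scheme maximizes $R_{ws}=R_1+\mu R_2$ over all such schemes, then $P_1^{(public)}+P_1^{(private)}=P_1$ and $P_2^{(public)}+P_2^{(private)}=P_2$; i.e., the power budgets are fully used.
   Context: Two-user weak Gaussian interference channel with unit noise: $Y_1=X_1+\sqrt{a}X_2+Z_1$, $Y_2=\sqrt{b}X_1+X_2+Z_2$, $Z_1,Z_2\sim N(0,1)$ independent of the inputs, $0<a<1$, $0<b<1$. Public code-books are decoded at both receivers (rates must be decodable at both), private code-books only at their intended receiver after removing public ones, treating the other user's private signal as noise. $R_i$ is the total (public plus private) rate of user $i$. *)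

(* Defs.v *)
From Stdlib Require Import Reals.
Open Scope R_scope.

Definition Cg (x : R) : R := ln (1 + x) / (2 * ln 2).

Record scheme := Scheme {
  Pc1 : R;  (* public power of user 1 *)
  Pp1 : R;  (* private power of user 1 *)
  Pc2 : R;  (* public power of user 2 *)
  Pp2 : R;  (* private power of user 2 *)
  Rc1 : R;  (* public rate of user 1 *)
  Rp1 : R;  (* private rate of user 1 *)
  Rc2 : R;  (* public rate of user 2 *)
  Rp2 : R   (* private rate of user 2 *)
}.

Definition R1 (s : scheme) : R := Rc1 s + Rp1 s.
Definition R2 (s : scheme) : R := Rc2 s + Rp2 s.

Definition Rws (mu : R) (s : scheme) : R := R1 s + mu * R2 s.

(* Feasibility for the weak GIC  Y1 = X1 + sqrt a X2 + Z1,
   Y2 = sqrt b X1 + X2 + Z2, unit noise, power budgets P1 P2.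
   Receiver k jointly decodes both public code-books (a MAC), treating all
   private signals as noise; then, after removing the public ones, decodes
   its own private code-book treating the other user's private signal as
   noise. *)
Definition feasible (a b P1 P2 : R) (s : scheme) : Prop :=
  let N1 := 1 + Pp1 s + a * Pp2 s in
  let N2 := 1 + b * Pp1 s + Pp2 s in
  0 <= Pc1 s /\ 0 <= Pp1 s /\ 0 <= Pc2 s /\ 0 <= Pp2 s /\
  Pc1 s + Pp1 s <= P1 /\ Pc2 s + Pp2 s <= P2 /\
  0 <= Rc1 s /\ 0 <= Rp1 s /\ 0 <= Rc2 s /\ 0 <= Rp2 s /\
  Rc1 s <= Cg (Pc1 s / N1) /\
  Rc2 s <= Cg (a * Pc2 s / N1) /\
  Rc1 s + Rc2 s <= Cg ((Pc1 s + a * Pc2 s) / N1) /\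
  Rc1 s <= Cg (b * Pc1 s / N2) /\
  Rc2 s <= Cg (Pc2 s / N2) /\
  Rc1 s + Rc2 s <= Cg ((b * Pc1 s + Pc2 s) / N2) /\
  Rp1 s <= Cg (Pp1 s / (1 + a * Pp2 s)) /\
  Rp2 s <= Cg (Pp2 s / (1 + b * Pp1 s)).

(* Main.v *)
Require Import Defs.
From Stdlib Require Import Reals Lra.
Open Scope R_scope.

Lemma Cg_lt x y : 0 <= x -> x < y -> Cg x < Cg y.
Proof.
  intros hx hxy. unfold Cg, Rdiv.
  assert (h2 : 0 < ln 2) by (pose proof ln_lt_2; lra).
  apply Rmult_lt_compat_r.
  - apply Rinv_0_lt_compat; lra.
  - apply ln_increasing; lra.
Qed.

Lemma Cg_div_lt x y N : 0 <= x -> x < y -> 0 < N -> Cg (x / N) < Cg (y / N).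
Proof.
  intros hx hxy hN. apply Cg_lt.
  - unfold Rdiv; apply Rmult_le_pos; [lra | left; apply Rinv_0_lt_compat; lra].
  - unfold Rdiv; apply Rmult_lt_compat_r; [apply Rinv_0_lt_compat; lra | lra].
Qed.

Theorem theorem1 (a b P1 P2 mu : R)
  (ha : 0 < a < 1) (hb : 0 < b < 1)
  (hP1 : 0 < P1) (hP2 : 0 < P2) (hmu : 0 < mu)
  (s : scheme) (hs : feasible a b P1 P2 s)
  (hmax : forall t : scheme, feasible a b P1 P2 t -> Rws mu t <= Rws mu s) :
  Pc1 s + Pp1 s = P1 /\ Pc2 s + Pp2 s = P2.
Proof.
  destruct s as [c1 p1 c2 p2 r1 q1 r2 q2].
  unfold feasible in hs; simpl in hs.
  destruct hs as (h1&h2&h3&h4&h5&h6&h7&h8&h9&h10&h11&h12&h13&h14&h15&h16&h17&h18).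
  set (N1 := 1 + p1 + a * p2) in *.
  set (N2 := 1 + b * p1 + p2) in *.
  assert (hN1 : 0 < N1) by (unfold N1; nra).
  assert (hN2 : 0 < N2) by (unfold N2; nra).
  simpl. split.
  - destruct (Rle_lt_or_eq_dec _ _ h5) as [hlt|heq]; [exfalso|exact heq].
    set (D := P1 - c1 - p1).
    set (d1 := Cg ((c1 + D) / N1) - Cg (c1 / N1)).
    set (d2 := Cg ((c1 + D + a * c2) / N1) - Cg ((c1 + a * c2) / N1)).
    set (d3 := Cg (b * (c1 + D) / N2) - Cg (b * c1 / N2)).
    set (d4 := Cg ((b * (c1 + D) + c2) / N2) - Cg ((b * c1 + c2) / N2)).
    assert (e1 : 0 < d1) by (unfold d1; assert (Cg (c1 / N1) < Cg ((c1 + D) / N1)) by (apply Cg_div_lt; unfold D; lra); lra).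
    assert (e2 : 0 < d2) by (unfold d2; assert (Cg ((c1 + a*c2) / N1) < Cg ((c1 + D + a*c2) / N1)) by (apply Cg_div_lt; unfold D; nra); lra).
    assert (e3 : 0 < d3) by (unfold d3; assert (Cg (b*c1 / N2) < Cg (b*(c1 + D) / N2)) by (apply Cg_div_lt; unfold D; nra); lra).
    assert (e4 : 0 < d4) by (unfold d4; assert (Cg ((b*c1 + c2) / N2) < Cg ((b*(c1 + D) + c2) / N2)) by (apply Cg_div_lt; unfold D; nra); lra).
    set (eps := Rmin (Rmin d1 d2) (Rmin d3 d4)).
    assert (ep : 0 < eps) by (unfold eps; repeat apply Rmin_glb_lt; assumption).
    assert (m1 : eps <= d1) by (unfold eps; eapply Rle_trans; [apply Rmin_l|apply Rmin_l]).
    assert (m2 : eps <= d2) by (unfold eps; eapply Rle_trans; [apply Rmin_l|apply Rmin_r]).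
    assert (m3 : eps <= d3) by (unfold eps; eapply Rle_trans; [apply Rmin_r|apply Rmin_l]).
    assert (m4 : eps <= d4) by (unfold eps; eapply Rle_trans; [apply Rmin_r|apply Rmin_r]).
    specialize (hmax (Scheme (c1 + D) p1 c2 p2 (r1 + eps) q1 r2 q2)).
    unfold Rws, Defs.R1, Defs.R2 in hmax; simpl in hmax.
    assert (r1 + eps + q1 + mu * (r2 + q2) <= r1 + q1 + mu * (r2 + q2)).
    { apply hmax. unfold feasible; simpl. fold N1 N2.
      unfold d1, d2, d3, d4 in *. unfold D in *.
      repeat split; try lra; nra. }
    lra.
  - destruct (Rle_lt_or_eq_dec _ _ h6) as [hlt|heq]; [exfalso|exact heq].
    set (D := P2 - c2 - p2).
    set (d1 := Cg (a * (c2 + D) / N1) - Cg (a * c2 / N1)).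
    set (d2 := Cg ((c1 + a * (c2 + D)) / N1) - Cg ((c1 + a * c2) / N1)).
    set (d3 := Cg ((c2 + D) / N2) - Cg (c2 / N2)).
    set (d4 := Cg ((b * c1 + (c2 + D)) / N2) - Cg ((b * c1 + c2) / N2)).
    assert (e1 : 0 < d1) by (unfold d1; assert (Cg (a*c2 / N1) < Cg (a*(c2 + D) / N1)) by (apply Cg_div_lt; unfold D; nra); lra).
    assert (e2 : 0 < d2) by (unfold d2; assert (Cg ((c1 + a*c2) / N1) < Cg ((c1 + a*(c2 + D)) / N1)) by (apply Cg_div_lt; unfold D; nra); lra).
    assert (e3 : 0 < d3) by (unfold d3; assert (Cg (c2 / N2) < Cg ((c2 + D) / N2)) by (apply Cg_div_lt; unfold D; nra); lra).
    assert (e4 : 0 < d4) by (unfold d4; assert (Cg ((b*c1 + c2) / N2) < Cg ((b*c1 + (c2 + D)) / N2)) by (apply Cg_div_lt; unfold D; nra); lra).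
    set (eps := Rmin (Rmin d1 d2) (Rmin d3 d4)).
    assert (ep : 0 < eps) by (unfold eps; repeat apply Rmin_glb_lt; assumption).
    assert (m1 : eps <= d1) by (unfold eps; eapply Rle_trans; [apply Rmin_l|apply Rmin_l]).
    assert (m2 : eps <= d2) by (unfold eps; eapply Rle_trans; [apply Rmin_l|apply Rmin_r]).
    assert (m3 : eps <= d3) by (unfold eps; eapply Rle_trans; [apply Rmin_r|apply Rmin_l]).
    assert (m4 : eps <= d4) by (unfold eps; eapply Rle_trans; [apply Rmin_r|apply Rmin_r]).
    specialize (hmax (Scheme c1 p1 (c2 + D) p2 r1 q1 (r2 + eps) q2)).
    unfold Rws, Defs.R1, Defs.R2 in hmax; simpl in hmax.
    assert (r1 + q1 + mu * (r2 + eps + q2) <= r1 + q1 + mu * (r2 + q2)).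
    { apply hmax. unfold feasible; simpl. fold N1 N2.
      unfold d1, d2, d3, d4 in *. unfold D in *.
      repeat split; try lra; nra. }
    nra.
Qed.
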